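(* Let $k\ge 1$ and let $f:2^{[k]}\to\mathbb{R}$ be submodular, normalized and increasing. Fix any map $\mathrm{sign}^*:\mathbb{R}^k\to\mathcal{Y}$ with $\mathrm{sign}^*(u)_i=\mathrm{sign}(u_i)$ whenever $u_i\neq 0$ (ties at $u_i=0$ broken arbitrarily). Then the pair $(L^f,\mathrm{sign}^* )$ is consistent (equivalently, calibrated) with respect to the structured binary classification loss $\ell^f$ if and only if $f$ is modular.
   Context: $[k]=\{1,\dots,k\}$, $\mathcal{Y}=\{-1,1\}^k$, $\Delta_\mathcal{Y}$ is the set of probability distributions on $\mathcal{Y}$. For $u,u'\in\mathbb{R}^k$, $u\odot u'$ is the entrywise product; $\mathbbm{1}$ is the all-ones vector; $(x)_+$ is the entrywise positive part. A set function $f:2^{[k]}\to\mathbb{R}$ is submodular if $f(S)+f(T)\ge f(S\cup T)+f(S\cap T)$ for all $S,T\subseteq[k]$, modular if this always holds with equality, increasing if $f(S\cup T)\ge f(S)$ for all disjoint $S,T$, and normalized if $f(\emptyset)=0$. The Lovász extension of $f$ is $F(x)=\max_{\pi}\sum_{i=1}^k x_{\pi_i}\big(f(\{\pi_1,\dots,\pi_i\})-f(\{\pi_1,\dots,\pi_{i-1}\})\big)$ for $x\in\mathbb{R}^k_+$, the max over permutations $\pi$ of $[k]$. The Lovász hinge is $L^f:\mathbb{R}^k\times\mathcal{Y}\to\mathbb{R}$, $L^f(u,y)=F((\mathbbm{1}-u\odot y)_+)$. The target loss is $\ell^f:\mathcal{Y}\times\mathcal{Y}\to\mathbb{R}$,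 $\ell^f(r,y)=f(\{i\in[k]: r_i\neq y_i\})$. For a loss $\ell$ and $p\in\Delta_\mathcal{Y}$ write $\ell(r;p)=\sum_{y}p_y\,\ell(r,y)$. A pair $(L,\psi)$ with $\psi:\mathbb{R}^k\to\mathcal{R}$ is calibrated with respect to a loss $\ell:\mathcal{R}\times\mathcal{Y}\to\mathbb{R}$ ($\mathcal{R}$ finite) if for every $p\in\Delta_\mathcal{Y}$, $\inf\{L(u;p): \psi(u)\notin\arg\min_{r\in\mathcal{R}}\ell(r;p)\}>\inf_{u\in\mathbb{R}^k}L(u;p)$; in this setting consistency is equivalent to calibration. *)

(* Defs.v *)
From HB Require Import structures.
From mathcomp Require Import all_boot all_order all_algebra all_fingroup.
From mathcomp Require Import classical_sets reals constructive_ereal ereal.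
Set Implicit Arguments. Unset Strict Implicit. Unset Printing Implicit Defensive.
Import Order.TTheory GRing.Theory Num.Theory.
Local Open Scope ring_scope.

Section Defs.
Variables (R : realType) (k : nat).

(* labels Y = {-1,1}^k, encoded as boolean vectors: true <-> +1, false <-> -1 *)
Definition Ylab := {ffun 'I_k -> bool}.
Definition yval (y : Ylab) (i : 'I_k) : R := if y i then 1 else -1.

Definition submodular (f : {set 'I_k} -> R) :=
  forall S T, f (S :|: T) + f (S :&: T) <= f S + f T.
Definition modular (f : {set 'I_k} -> R) :=
  forall S T, f S + f T = f (S :|: T) + f (S :&: T).
Definition increasing (f : {set 'I_k} -> R) :=
  forall S T, S :&: T = finset.set0 -> f S <= f (S :|: T).
Definition normalized (f : {set 'I_k} -> R) := f finset.set0 = 0.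

Definition prefix (s : {perm 'I_k}) (j : nat) : {set 'I_k} :=
  [set s i | i : 'I_k & (i < j)%N].

Definition lovasz_term (f : {set 'I_k} -> R) (x : 'I_k -> R) (s : {perm 'I_k}) : R :=
  \sum_(i < k) x (s i) * (f (prefix s i.+1) - f (prefix s i)).

Definition lovasz (f : {set 'I_k} -> R) (x : 'I_k -> R) : R :=
  \big[Num.max/lovasz_term f x 1%g]_(s : {perm 'I_k}) lovasz_term f x s.

Definition lovasz_hinge (f : {set 'I_k} -> R) (u : 'I_k -> R) (y : Ylab) : R :=
  lovasz f (fun i => Num.max (1 - u i * yval y i) 0).

Definition target_loss (f : {set 'I_k} -> R) (r y : Ylab) : R :=
  f [set i | r i != y i].

Definition is_distr (p : Ylab -> R) :=
  (forall y, 0 <= p y) /\ \sum_(y : Ylab) p y = 1.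

Definition exp_loss {A : Type} (L : A -> Ylab -> R) (p : Ylab -> R) (a : A) : R :=
  \sum_(y : Ylab) p y * L a y.

Definition calibrated (L : ('I_k -> R) -> Ylab -> R) (psi : ('I_k -> R) -> Ylab)
  (l : Ylab -> Ylab -> R) :=
  forall p : Ylab -> R, is_distr p ->
    (ereal_inf [set (exp_loss L p u)%:E | u in
        [set u | ~ (forall r : Ylab, (exp_loss l p (psi u) <= exp_loss l p r)%R)]]
     > ereal_inf [set (exp_loss L p u)%:E | u in [set: 'I_k -> R]])%E.

Definition sign_star (psi : ('I_k -> R) -> Ylab) :=
  forall u i, u i != 0 -> psi u i = (0 < u i).

End Defs.

(* Main.v *)
Require Import Defs.
From HB Require Import structures.
From mathcomp Require Import all_boot all_order all_algebra all_fingroup.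
From mathcomp Require Import classical_sets reals constructive_ereal ereal.
From mathcomp Require Import ring lra.
Import Order.TTheory GRing.Theory Num.Theory.
Local Open Scope ring_scope.

Lemma f_mono (R : realType) k (f : {set 'I_k} -> R) : increasing f ->
  forall S A : {set 'I_k}, S \subset A -> f S <= f A.
Proof.
move=> finc S A sSA; have := finc S (A :\: S).
have -> : S :&: (A :\: S) = finset.set0.
  by apply/setP=> x; rewrite !inE; case: (x \in S).
have -> : S :|: (A :\: S) = A.
  apply/setP=> x; rewrite !inE; case: (boolP (x \in S)) => xS //=.
  by rewrite (fintype.subsetP sSA x xS).
by apply.
Qed.

Lemma f_ge0 (R : realType) k (f : {set 'I_k} -> R) : normalized f -> increasing f ->
  forall S, 0 <= f S.
Proof. move=> fn fi S; rewrite -fn; apply: f_mono => //; exact: finset.sub0set. Qed.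

Lemma mem_prefix k (s : {perm 'I_k}) j y : (y \in Defs.prefix s j) = ((s^-1)%g y < j)%N.
Proof.
apply/imsetP/idP => [[m]|h]; first by rewrite inE => hm ->; rewrite permK.
by exists ((s^-1)%g y); rewrite ?inE ?permKV.
Qed.

Lemma prefix_sub k (s : {perm 'I_k}) (i : nat) : Defs.prefix s i \subset Defs.prefix s i.+1.
Proof. by apply/fintype.subsetP=> y; rewrite !mem_prefix => /ltnW. Qed.

Lemma sum_marg (R : realType) k (f : {set 'I_k} -> R) (s : {perm 'I_k}) :
  normalized f ->
  \sum_(i < k) (f (Defs.prefix s i.+1) - f (Defs.prefix s i)) = f [set: 'I_k].
Proof.
move=> fn.
rewrite -(big_mkord xpredT (fun i => f (Defs.prefix s i.+1) - f (Defs.prefix s i))).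
rewrite telescope_sumr //.
have -> : Defs.prefix s k = [set: 'I_k] by apply/setP=> y; rewrite mem_prefix inE ltn_ord.
have -> : Defs.prefix s 0 = finset.set0 by apply/setP=> y; rewrite mem_prefix inE.
by rewrite fn subr0.
Qed.

Lemma marg_ge0 (R : realType) k (f : {set 'I_k} -> R) (s : {perm 'I_k}) (i : nat) :
  increasing f -> 0 <= f (Defs.prefix s i.+1) - f (Defs.prefix s i).
Proof. by move=> fi; rewrite subr_ge0; apply: f_mono => //; apply: prefix_sub. Qed.

Lemma term_le (R : realType) k (f : {set 'I_k} -> R) s x c :
  normalized f -> increasing f ->
  (forall l, x l <= c) -> lovasz_term f x s <= c * f [set: 'I_k].
Proof.
move=> fn fi hx; rewrite /lovasz_term -(@sum_marg _ _ f s fn) mulr_sumr.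
by apply: ler_sum => i _; apply: ler_wpM2r; [apply: marg_ge0|apply: hx].
Qed.

Lemma term_ge (R : realType) k (f : {set 'I_k} -> R) s x c :
  normalized f -> increasing f ->
  (forall l, c <= x l) -> c * f [set: 'I_k] <= lovasz_term f x s.
Proof.
move=> fn fi hx; rewrite /lovasz_term -(@sum_marg _ _ f s fn) mulr_sumr.
by apply: ler_sum => i _; apply: ler_wpM2r; [apply: marg_ge0|apply: hx].
Qed.

Lemma term_add (R : realType) k (f : {set 'I_k} -> R) s x y :
  lovasz_term f x s + lovasz_term f y s = lovasz_term f (fun l => x l + y l) s.
Proof. by rewrite /lovasz_term -big_split; apply: eq_bigr => i _; rewrite mulrDl. Qed.

Lemma lovasz_le (R : realType) k (f : {set 'I_k} -> R) x c :
  normalized f -> increasing f ->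
  (forall l, x l <= c) -> lovasz f x <= c * f [set: 'I_k].
Proof.
move=> fn fi hx; rewrite /lovasz; apply: bigmax_le; first exact: term_le.
by move=> s _; apply: term_le.
Qed.

Lemma lovasz_ge (R : realType) k (f : {set 'I_k} -> R) x s :
  lovasz_term f x s <= lovasz f x.
Proof. exact: le_bigmax. Qed.

Lemma mod_sum (R : realType) k (f : {set 'I_k} -> R) : modular f -> normalized f ->
  forall S, f S = \sum_(l in S) f [set l].
Proof.
move=> fm fn S; move: {2}#|S| (erefl #|S|) => n; elim: n S => [|n IH] S hS.
  have -> : S = finset.set0 by apply/eqP; rewrite -cards_eq0 hS.
  by rewrite big_set0 fn.
have : (0 < #|S|)%N by rewrite hS.
case/card_gt0P => x xS; rewrite (big_setD1 _ xS) -IH; last first.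
  by move: hS; rewrite (cardsD1 x) xS add1n => -[].
have := fm [set x] (S :\ x).
rewrite finset.setD1K //.
have -> : [set x] :&: (S :\ x) = finset.set0.
  by apply/setP => y; rewrite !inE; case: (y == x).
by rewrite fn addr0 => <-.
Qed.

Lemma lovasz_mod (R : realType) k (f : {set 'I_k} -> R) x : modular f -> normalized f ->
  lovasz f x = \sum_l x l * f [set l].
Proof.
move=> fm fn.
have ht : forall s, lovasz_term f x s = \sum_l x l * f [set l].
  move=> s; rewrite /lovasz_term [RHS](reindex_inj (@perm_inj _ s)) /=.
  apply: eq_bigr => i _; congr (_ * _).
  rewrite (@mod_sum _ _ f fm fn (Defs.prefix s i.+1)) (@mod_sum _ _ f fm fn (Defs.prefix s i)) (big_setD1 (s i)); last by rewrite mem_prefix permK.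
  have -> : Defs.prefix s i.+1 :\ s i = Defs.prefix s i; last by rewrite addrK.
  apply/setP => y; rewrite !inE !mem_prefix.
  have -> : (y != s i) = ((s^-1)%g y != i).
    apply/idP/idP; apply: contra => /eqP h; apply/eqP.
      by rewrite -h permKV.
    by rewrite h permK.
  by rewrite ltnS ltn_neqAle andbC.
rewrite /lovasz; apply: (big_ind (fun v => v = \sum_l x l * f [set l])).
- exact: ht.
- by move=> a b -> ->; rewrite maxxx.
- by move=> s _; apply: ht.
Qed.

Lemma nonmod_witness (R : realType) k (f : {set 'I_k} -> R) :
  submodular f -> normalized f ->
  (forall P, f P + f (~: P) <= f [set: 'I_k]) -> modular f.
Proof.
move=> fs fn H.
have hc : forall X, f (~: X) = f [set: 'I_k] - f X.
  move=> X; have := fs X (~: X); rewrite finset.setUCr finset.setICr fn addr0.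
  have := H X; lra.
move=> S T; have h1 := fs S T; have h2 := fs (~: S) (~: T).
rewrite -finset.setCI -finset.setCU !hc in h2; lra.
Qed.

Lemma sum_pt (R : realType) k (a : Ylab k) (G : Ylab k -> R) :
  \sum_y (y == a)%:R * G y = G a.
Proof.
rewrite (bigD1 a) //= eqxx mul1r big1 ?addr0 // => y /negbTE ->; by rewrite mul0r.
Qed.

Lemma sum_split_bool (R : realType) k (p : Ylab k -> R) l (g : bool -> R) :
  \sum_y p y * g (y l) =
  (\sum_(y : Ylab k | y l) p y) * g true + (\sum_(y : Ylab k | ~~ y l) p y) * g false.
Proof.
rewrite (bigID (fun y : Ylab k => y l)) /= !mulr_suml; congr (_ + _).
  by apply: eq_bigr => y ->.
by apply: eq_bigr => y /negbTE ->.
Qed.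

Lemma ereal_contra (R : realType) (a : R) (I J : \bar R) :
  (a%:E <= J)%E -> (J < I)%E -> (forall e : R, 0 < e -> (I <= ((1+e)*a)%:E)%E) -> 0 <= a -> False.
Proof.
move=> hJ hJI hI ha; have hlow := le_lt_trans hJ hJI.
move: I hI hlow {hJI} => [b| |] hI hlow.
- rewrite lte_fin in hlow.
  pose e := (b - a) / (2 * (a + 1)).
  have he : 0 < e by rewrite /e divr_gt0 // ?subr_gt0 //; lra.
  have := hI e he; rewrite lee_fin => hb.
  have hea : e * (a + 1) = (b - a) / 2 by rewrite /e; clear hI hJ; field; lra.
  have : e * a <= e * (a + 1) by rewrite ler_wpM2l ?ltW //; lra.
  nra.
- by have := hI 1 ltr01.
- by [].
Qed.

Lemma dir2 (R : realType) (k : nat) (hk : (0 < k)%N)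
  (f : {set 'I_k} -> R)
  (fsub : submodular f) (fnorm : normalized f) (finc : increasing f)
  (psi : ('I_k -> R) -> Ylab k) (hpsi : sign_star psi) :
  calibrated (lovasz_hinge f) psi (target_loss f) -> modular f.
Proof.
move=> cal.
case: (boolP [exists P : {set 'I_k}, f [set: 'I_k] < f P + f (~: P)]); last first.
  move/existsPn => H; apply: nonmod_witness => // P.
  by rewrite leNgt; apply: H.
case/existsP => P hP; exfalso.
pose yT : Ylab k := [ffun _ => true].
pose yF : Ylab k := [ffun _ => false].
have yTF : yT != yF.
  apply/eqP => /ffunP /(_ (Ordinal hk)); rewrite !ffunE.  done.
pose p : Ylab k -> R := fun y => ((y == yT)%:R + (y == yF)%:R) / 2.
have hsum : forall G : Ylab k -> R, \sum_y p y * G y = (G yT + G yF) / 2.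
  move=> G; rewrite /p.
  under eq_bigr => y _ do rewrite mulrAC mulrDl.
  by rewrite -mulr_suml big_split /= !sum_pt.
have pd : is_distr p.
  split; first by move=> y; rewrite /p divr_ge0 // addr_ge0 // ler0n.
  have := hsum (fun _ => 1); under eq_bigr => y _ do rewrite mulr1.
  by move=> ->; lra.
set fV := f [set: 'I_k].
have fV0 : 0 <= fV by apply: f_ge0.
have hyT : forall i, @yval R _ yT i = 1 by move=> i; rewrite /yval ffunE.
have hyF : forall i, @yval R _ yF i = -1 by move=> i; rewrite /yval ffunE.
have lower : forall u, fV <= exp_loss (lovasz_hinge f) p u.
  move=> u; rewrite /exp_loss hsum /lovasz_hinge.
  have h1 := @lovasz_ge _ _ f (fun i => Num.max (1 - u i * @yval R _ yT i) 0) 1%g.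
  have h2 := @lovasz_ge _ _ f (fun i => Num.max (1 - u i * @yval R _ yF i) 0) 1%g.
  have h3 := @term_add _ _ f 1%g (fun i => Num.max (1 - u i * @yval R _ yT i) 0)
     (fun i => Num.max (1 - u i * @yval R _ yF i) 0).
  have h4 : 2 * fV <= lovasz_term f (fun l => Num.max (1 - u l * @yval R _ yT l) 0 +
                  Num.max (1 - u l * @yval R _ yF l) 0) 1%g.
    apply: term_ge => // l; rewrite hyT hyF mulr1 mulrN1 opprK.
    have a1 : 1 - u l <= Num.max (1 - u l) 0 by rewrite le_max lexx.
    have a2 : 1 + u l <= Num.max (1 + u l) 0 by rewrite le_max lexx.
    lra.
  lra.
pose r' : Ylab k := [ffun l => l \in P].
have upper : forall e, 0 < e -> exists u,
    psi u = r' /\ exp_loss (lovasz_hinge f) p u <= (1 + e) * fV.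
  move=> e he; exists (fun l => if l \in P then e else - e); split.
    apply/ffunP => l; rewrite ffunE hpsi; last by case: (l \in P); rewrite ?oppr_eq0 (gt_eqF he).
    by case: (l \in P); [rewrite he | rewrite oppr_gt0 ltNge ltW].
  rewrite /exp_loss hsum.
  have hb : forall y, lovasz_hinge f (fun l => if l \in P then e else - e) y <= (1 + e) * fV.
    move=> y; apply: lovasz_le => // l; rewrite ge_max; apply/andP; split; last lra.
    rewrite /yval; case: (l \in P); case: (y l); lra.
  have := hb yT; have := hb yF; lra.
have hP' : [set j | r' j != yT j] = ~: P /\ [set j | r' j != yF j] = P.
  by split; apply/setP => j; rewrite !inE !ffunE; case: (j \in P).
have bad : forall u, psi u = r' ->
   ~ (forall r : Ylab k, exp_loss (target_loss f) p (psi u) <= exp_loss (target_loss f) p r).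
  move=> u -> H; have := H yT; rewrite /exp_loss !hsum /target_loss.
  case: hP' => -> ->.
  have -> : [set j | yT j != yT j] = finset.set0 by apply/setP => j; rewrite !inE eqxx.
  have -> : [set j | yT j != yF j] = [set: 'I_k] by apply/setP => j; rewrite !inE !ffunE.
  rewrite fnorm /fV; lra.
apply: (@ereal_contra _ fV _ _ _ (cal p pd) _ fV0).
  by apply/ereal_infP => _ [u _ <-]; rewrite lee_fin; apply: lower.
move=> e he; case: (upper e he) => u [hu hle].
apply: ge_ereal_inf; exists (exp_loss (lovasz_hinge f) p u)%:E.
  by exists u => //; apply: bad.
by rewrite lee_fin.
Qed.

Lemma coordH (R : realType) (a b t : R) : 0 <= a -> 0 <= b ->
  2 * (if b <= a then b else a) <= a * Num.max (1 - t) 0 + b * Num.max (1 + t) 0.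
Proof.
move=> a0 b0.
have x1a : 1 - t <= Num.max (1 - t) 0 by rewrite le_max lexx.
have x1b : 0 <= Num.max (1 - t) 0 by rewrite le_max lexx orbT.
have x2a : 1 + t <= Num.max (1 + t) 0 by rewrite le_max lexx.
have x2b : 0 <= Num.max (1 + t) 0 by rewrite le_max lexx orbT.
set x1 := Num.max (1 - t) 0 in x1a x1b *; set x2 := Num.max (1 + t) 0 in x2a x2b *.
case: ifP => hab.
- have h1 : b * x1 <= a * x1 by rewrite ler_wpM2r.
  have h2 : b * 2 <= b * (x1 + x2) by rewrite ler_wpM2l //; lra.
  rewrite mulrDr in h2; lra.
- have hab' : a <= b by move/negbT: hab; rewrite -ltNge => /ltW.
  have h1 : a * x2 <= b * x2 by rewrite ler_wpM2r.
  have h2 : a * 2 <= a * (x1 + x2) by rewrite ler_wpM2l //; lra.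
  rewrite mulrDr in h2; lra.
Qed.

Lemma coordHo (R : realType) (a b : R) :
  a * Num.max (1 - (if b <= a then 1 else -1)) 0 +
  b * Num.max (1 + (if b <= a then 1 else -1)) 0 = 2 * (if b <= a then b else a).
Proof.
case: ifP => _.
- rewrite subrr maxxx mulr0 add0r max_l; first by rewrite mulrC.
  by rewrite addr_ge0.
- rewrite opprK addrN maxxx mulr0 addr0 max_l; first by rewrite mulrC.
  by rewrite addr_ge0.
Qed.

Lemma coordHbad (R : realType) (a b t : R) : 0 <= a -> 0 <= b ->
  (0 <= t /\ a < b) \/ (t <= 0 /\ b < a) ->
  2 * (if b <= a then b else a) + `|a - b| <= a * Num.max (1 - t) 0 + b * Num.max (1 + t) 0.
Proof.
move=> a0 b0 h.
have x1a : 1 - t <= Num.max (1 - t) 0 by rewrite le_max lexx.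
have x2a : 1 + t <= Num.max (1 + t) 0 by rewrite le_max lexx.
have h1 : a * (1 - t) <= a * Num.max (1 - t) 0 by rewrite ler_wpM2l.
have h2 : b * (1 + t) <= b * Num.max (1 + t) 0 by rewrite ler_wpM2l.
set x1 := Num.max (1 - t) 0 in x1a h1 *; set x2 := Num.max (1 + t) 0 in x2a h2 *.
rewrite mulrBr mulr1 in h1; rewrite mulrDr mulr1 in h2.
case: h => [[t0 ab]|[t0 ba]].
- have -> : (b <= a) = false by apply/negbTE; rewrite -ltNge.
  rewrite ler0_norm; last by lra.
  have : a * t <= b * t by rewrite ler_wpM2r // ltW.
  lra.
- rewrite ifT; last exact: ltW.
  rewrite ger0_norm; last by lra.
  have : a * t <= b * t by rewrite ler_wnM2r // ltW.
  lra.
Qed.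

Lemma dir1 (R : realType) (k : nat)
  (f : {set 'I_k} -> R)
  (fnorm : normalized f) (finc : increasing f)
  (psi : ('I_k -> R) -> Ylab k) (hpsi : sign_star psi) :
  modular f -> calibrated (lovasz_hinge f) psi (target_loss f).
Proof.
move=> fm p [p0 p1].
pose w l := f [set l].
have w0 : forall l, 0 <= w l by move=> l; apply: f_ge0.
pose a l := \sum_(y : Ylab k | y l) p y.
pose b l := \sum_(y : Ylab k | ~~ y l) p y.
have a0 : forall l, 0 <= a l by move=> l; apply: sumr_ge0.
have b0 : forall l, 0 <= b l by move=> l; apply: sumr_ge0.
pose H l t := a l * Num.max (1 - t) 0 + b l * Num.max (1 + t) 0.
have hL : forall u, exp_loss (lovasz_hinge f) p u = \sum_l w l * H l (u l).
  move=> u; rewrite /exp_loss /lovasz_hinge.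
  under eq_bigr => y _ do rewrite (@lovasz_mod _ _ f _ fm fnorm) mulr_sumr.
  rewrite exchange_big /=; apply: eq_bigr => l _.
  pose g := fun c : bool => Num.max (1 - u l * (if c then 1 else -1)) 0.
  rewrite (eq_bigr (fun y => p y * g (y l) * w l)); last first.
    by move=> y _; rewrite mulrA.
  rewrite -mulr_suml sum_split_bool mulrC /H /g /=.
  by rewrite mulr1 mulrN1 opprK.
have hT : forall r, exp_loss (target_loss f) p r = \sum_l w l * (if r l then b l else a l).
  move=> r; rewrite /exp_loss /target_loss.
  under eq_bigr => y _ do rewrite (@mod_sum _ _ f fm fnorm) big_mkcond /= mulr_sumr.
  rewrite exchange_big /=; apply: eq_bigr => l _.
  pose g := fun c : bool => (r l != c)%:R : R.
  rewrite (eq_bigr (fun y => p y * g (y l) * w l)); last first.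
    by move=> y _; rewrite inE /g /=; case: (r l != y l); rewrite ?mulr1n ?mulr0n ?mulr1 ?mul1r ?mulr0 ?mul0r.
  rewrite -mulr_suml sum_split_bool mulrC /g /=; congr (_ * _).
  by case: (r l); rewrite /= ?mulr0 ?mulr1 ?add0r ?addr0.
pose m l := if b l <= a l then b l else a l.
pose M := \sum_l w l * (2 * m l).
pose gap l := w l * `|a l - b l|.
pose d := \big[Num.min/1]_(l | 0 < gap l) gap l.
have d0 : 0 < d.
  by apply: (big_ind (fun v => 0 < v)) => // x y hx hy; rewrite lt_min hx hy.
have hd : forall l, 0 < gap l -> d <= gap l by move=> l hl; apply: bigmin_le_cond.
have upper : (ereal_inf [set (exp_loss (lovasz_hinge f) p u)%:E | u in [set: 'I_k -> R]]
              <= M%:E)%E.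
  apply: ge_ereal_inf; exists (exp_loss (lovasz_hinge f) p (fun l => if b l <= a l then 1 else -1))%:E.
    by exists (fun l => if b l <= a l then 1 else -1).
  rewrite lee_fin hL (eq_bigr (fun l => w l * (2 * m l))) //.
  by move=> l _; rewrite /H coordHo.
apply: (le_lt_trans upper); apply: (@lt_le_trans _ _ (M + d)%:E).
  by rewrite lte_fin ltrDl.
apply/ereal_infP => _ [u hu <-]; rewrite lee_fin.
case: (boolP [exists l, (0 < w l) && (if psi u l then a l < b l else b l < a l)]); last first.
  move/existsPn => hn; exfalso; apply: hu => r; rewrite !hT; apply: ler_sum => l _.
  move: (hn l) (w0 l); rewrite negb_and -leNgt; case/orP => [wl0 w0l|h _].
    have -> : w l = 0 by apply/le_anti/andP.
    by rewrite !mul0r.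
  apply: ler_wpM2l => //; move: h; case: (psi u l); case: (r l) => //=; rewrite -leNgt //.
case/existsP => l /andP [wl hl].
have hb : (0 <= u l /\ a l < b l) \/ (u l <= 0 /\ b l < a l).
  move: hl; case hpl: (psi u l) => hl; [left|right]; split => //.
  - rewrite leNgt; apply/negP => hneg.
    have := hpsi u l; rewrite (lt_eqF hneg) => /(_ isT); rewrite hpl => /esym.
    by rewrite ltNge ltW.
  - rewrite leNgt; apply/negP => hpos.
    have := hpsi u l; rewrite (gt_eqF hpos) => /(_ isT); rewrite hpl hpos.
    done.
have gl : 0 < gap l.
  rewrite /gap mulr_gt0 // normr_gt0 subr_eq0.
  by case: hb => -[_ h]; rewrite ?(gt_eqF h) ?(lt_eqF h).
have h1 : w l * (2 * m l + `|a l - b l|) <= w l * H l (u l).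
  by rewrite ler_wpM2l //; apply: coordHbad.
rewrite mulrDr in h1.
have h2 : \sum_(j | j != l) w j * (2 * m j) <= \sum_(j | j != l) w j * H j (u j).
  by apply: ler_sum => j _; rewrite ler_wpM2l //; apply: coordH.
have h3 := hd l gl.
rewrite hL /M (bigD1 l) //= [X in _ <= X](bigD1 l) //=.
rewrite /gap in h3; lra.
Qed.

Theorem theorem3 (R : realType) (k : nat) (hk : (0 < k)%N)
  (f : {set 'I_k} -> R)
  (fsub : submodular f) (fnorm : normalized f) (finc : increasing f)
  (psi : ('I_k -> R) -> Ylab k) (hpsi : sign_star psi) :
  calibrated (lovasz_hinge f) psi (target_loss f) <-> modular f.
Proof.
split; first exact: (@dir2 R k hk f fsub fnorm finc psi hpsi).
exact: (@dir1 R k f fnorm finc psi hpsi).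
Qed.
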